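(* Let $V$ be a finite-dimensional real inner product space with unit sphere $S$, let $M\subset V$ be a lattice with $M\otimes_{\mathbf Z}\mathbf R=V$ such that the inner product takes integral values on $M\times M$, let $\sigma\subset V$ be a rational polyhedral cone with respect to $M$, and let $f:V\to\mathbf R$ be a linear functional taking integral values on $M$. If $f$ takes a negative value on $\sigma$ and attains its minimum on $S\cap\sigma$ at $s$, then the ray $\mathbf R_{>0}\cdot s$ contains a unique nonzero indivisible lattice point of $M$.
   Context: A polyhedral cone is a finite intersection of half-spaces $\{g\ge0\}$ with $g$ linear; it is rational with respect to $M$ if it can be cut out by half-spaces defined by linear functionals taking integral values on $M$. A lattice point $m\in M$ is indivisible if $m=Nm'$ with $N\in\mathbf N$, $m'\in M$ implies $N=1$. *)

(* Defs.v *)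
From HB Require Import structures.
From mathcomp Require Import all_boot all_order all_algebra.
From mathcomp Require Import reals.
Set Implicit Arguments. Unset Strict Implicit. Unset Printing Implicit Defensive.
Import Order.TTheory GRing.Theory Num.Theory.
Local Open Scope ring_scope.

Definition ipG {R : realType} {n : nat} (G : 'M[R]_n) (x y : 'rV[R]_n) : R :=
  (x *m G *m y^T) 0 0.

Definition is_inner_product {R : realType} {n : nat} (G : 'M[R]_n) : Prop :=
  G^T = G /\ forall x : 'rV[R]_n, x != 0 -> 0 < ipG G x x.

(* The lattice M spanned by the rows of an invertible matrix B
   (so that M (x)_Z R = V). *)
Definition in_lattice {R : realType} {n : nat} (B : 'M[R]_n) (x : 'rV[R]_n) : Prop :=
  exists z : 'rV[int]_n, x = map_mx (fun k : int => k%:~R) z *m B.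

Definition lfun {R : realType} {n : nat} (c : 'cV[R]_n) (x : 'rV[R]_n) : R :=
  (x *m c) 0 0.

Definition integral_on_lattice {R : realType} {n : nat} (B : 'M[R]_n)
  (c : 'cV[R]_n) : Prop :=
  forall m, in_lattice B m -> lfun c m \is a Num.int.

Definition in_cone {R : realType} {n k : nat} (C : 'M[R]_(n, k)) (x : 'rV[R]_n) : Prop :=
  forall j : 'I_k, 0 <= lfun (col j C) x.

Definition rational_cone_data {R : realType} {n k : nat} (B : 'M[R]_n)
  (C : 'M[R]_(n, k)) : Prop :=
  forall j : 'I_k, integral_on_lattice B (col j C).

Definition in_unit_sphere {R : realType} {n : nat} (G : 'M[R]_n) (x : 'rV[R]_n) : Prop :=
  ipG G x x = 1.

Definition indivisible {R : realType} {n : nat} (B : 'M[R]_n) (m : 'rV[R]_n) : Prop :=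
  forall (N : nat) (m' : 'rV[R]_n), in_lattice B m' -> m = N%:R *: m' -> N = 1%N.

(* Main.v *)
Require Import Defs.
From HB Require Import structures.
From mathcomp Require Import all_boot all_order all_algebra.
From mathcomp Require Import reals.
From mathcomp Require Import ring lra.
Import Order.TTheory GRing.Theory Num.Theory.
Local Open Scope ring_scope.

Section Helpers.
Variable R : realType.

Lemma ipG_linl n (G : 'M[R]_n) a b x y z :
  ipG G (a *: x + b *: y) z = a * ipG G x z + b * ipG G y z.
Proof. by rewrite /ipG !mulmxDl -!scalemxAl !mxE. Qed.

Lemma ipG_sym n (G : 'M[R]_n) x y : G^T = G -> ipG G x y = ipG G y x.
Proof.
move=> GT; rewrite /ipG.
have -> : (x *m G *m y^T) 0 0 = ((x *m G *m y^T)^T) 0 0 by rewrite [RHS]mxE.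
by rewrite !trmx_mul trmxK GT mulmxA.
Qed.

Lemma lfun_lin n (c : 'cV[R]_n) a b x y :
  lfun c (a *: x + b *: y) = a * lfun c x + b * lfun c y.
Proof. by rewrite /lfun !mulmxDl -!scalemxAl !mxE. Qed.

Lemma lfunZ n (c : 'cV[R]_n) a x : lfun c (a *: x) = a * lfun c x.
Proof. by rewrite /lfun -!scalemxAl !mxE. Qed.

Lemma ipGZ n (G : 'M[R]_n) a x z : ipG G (a *: x) z = a * ipG G x z.
Proof. by rewrite /ipG -!scalemxAl !mxE. Qed.

Lemma small_eps k (a b : 'I_k -> R) e1 : 0 < e1 -> (forall j, 0 <= a j) ->
  (forall j, a j = 0 -> b j = 0) ->
  exists2 e, 0 < e & e <= e1 /\ forall j, 0 <= a j + e * b j.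
Proof.
move=> e1p a0 ab.
set S := \sum_j `|b j| / a j.
have S0 : 0 <= S by apply: sumr_ge0 => j _; rewrite divr_ge0.
have den : 0 < 1 + e1 * S by rewrite ltr_pwDl // mulr_ge0 // ltW.
exists (e1 / (1 + e1 * S)); first by rewrite divr_gt0.
split.
  rewrite ler_pdivrMr // ler_peMr ?(ltW e1p) //.
  by rewrite lerDl mulr_ge0 // ltW.
move=> j; have [aj0|ajn] := eqVneq (a j) 0.
  by rewrite aj0 (ab _ aj0) mulr0 addr0.
have ajp : 0 < a j by rewrite lt_def ajn a0.
have tj : `|b j| / a j <= S.
  rewrite /S (bigD1 j) //= lerDl; apply: sumr_ge0 => i _; rewrite divr_ge0 //.
set e := e1 / (1 + e1 * S).
have eS : e * S <= 1.
  rewrite /e mulrAC ler_pdivrMr // mul1r lerDr //.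
have ep : 0 <= e by rewrite divr_ge0 // ltW.
have : e * (`|b j| / a j) <= 1 by apply: le_trans eS; rewrite ler_wpM2l.
rewrite mulrA ler_pdivrMr // mul1r => h.
have : - (e * `|b j|) <= e * b j.
  by rewrite -mulrN ler_wpM2l // lerNl ler_normr lexx orbT.
lra.
Qed.


Lemma ipGZr n (G : 'M[R]_n) a x z : ipG G x (a *: z) = a * ipG G x z.
Proof. by rewrite /ipG linearZ /= -!scalemxAr !mxE. Qed.

Lemma ipG0 n (G : 'M[R]_n) z : ipG G 0 z = 0.
Proof. by rewrite /ipG !mul0mx mxE. Qed.

Lemma lfun0 n (c : 'cV[R]_n) : lfun c 0 = 0.
Proof. by rewrite /lfun mul0mx mxE. Qed.

Lemma cone_scale n k (C : 'M[R]_(n,k)) a x : 0 <= a -> in_cone C x -> in_cone C (a *: x).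
Proof. by move=> a0 hx j; rewrite lfunZ mulr_ge0. Qed.

Lemma minsq n k (G : 'M[R]_n) (C : 'M[R]_(n,k)) (c : 'cV[R]_n) (s : 'rV[R]_n) :
  is_inner_product G ->
  (forall y, in_unit_sphere G y -> in_cone C y -> lfun c s <= lfun c y) ->
  forall x, in_cone C x -> lfun c x < 0 ->
  (lfun c x)^+2 <= (lfun c s)^+2 * ipG G x x.
Proof.
move=> [GT Gpos] hmin x xc fx.
have xn0 : x != 0 by apply: contraTneq fx => ->; rewrite lfun0 ltxx.
have qp := Gpos x xn0.
set q := ipG G x x in qp *.
set r := Num.sqrt q.
have rp : 0 < r by rewrite sqrtr_gt0.
have r2 : r ^+ 2 = q by rewrite sqr_sqrtr // ltW.
have rip : 0 < r^-1 by rewrite invr_gt0.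
have := hmin (r^-1 *: x).
rewrite /in_unit_sphere ipGZ ipGZr lfunZ -/q.
have -> : r^-1 * (r^-1 * q) = 1.
  by rewrite -r2 expr2 mulrA -invfM mulVf // mulf_neq0 // gt_eqF.
move=> /(_ erefl (@cone_scale _ _ C _ x (ltW rip) xc)).
move=> h.
have h1 : r * lfun c s <= lfun c x.
  have := ler_wpM2l (ltW rp) h.
  by rewrite mulrA mulfV ?mul1r // (negbT (gt_eqF rp)).
rewrite -r2.
have h2 : r * lfun c s < 0 by apply: le_lt_trans h1 fx.
nra.
Qed.


Lemma kkt0 n k (G : 'M[R]_n) (C : 'M[R]_(n,k)) (c : 'cV[R]_n) (s : 'rV[R]_n) :
  is_inner_product G -> in_unit_sphere G s -> in_cone C s ->
  (forall y, in_unit_sphere G y -> in_cone C y -> lfun c s <= lfun c y) ->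
  lfun c s < 0 ->
  forall y, (forall j, lfun (col j C) s = 0 -> lfun (col j C) y = 0) ->
    ipG G s y = 0 -> lfun c y < 0 -> False.
Proof.
move=> Gip us cs hmin lamn y hy sy ly.
have [GT Gpos] := Gip.
set lam := lfun c s in lamn hmin *; set l := lfun c y in ly *.
set q := ipG G y y.
have q0 : 0 <= q.
  rewrite /q; have [->|yn0] := eqVneq y 0; first by rewrite ipG0.
  exact: ltW (Gpos _ yn0).
have e1p : 0 < lam * l / (lam ^+ 2 * q + 1).
  by rewrite divr_gt0 ?nmulr_rgt0 // ltr_wpDl // mulr_ge0 // sqr_ge0.
have [e ep [ee1 econe]] := @small_eps k (fun j => lfun (col j C) s)
   (fun j => lfun (col j C) y) _ e1p (fun j => cs j) hy.
set x := 1 *: s + e *: y.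
have xc : in_cone C x by move=> j; rewrite /x lfun_lin mul1r; exact: econe.
have fxe : lfun c x = lam + e * l by rewrite /x lfun_lin mul1r.
have el : e * l < 0 by rewrite pmulr_rlt0.
have fx : lfun c x < 0 by rewrite fxe; lra.
have := @minsq _ _ G C c s Gip hmin x xc fx.
have -> : ipG G x x = 1 + e ^+ 2 * q.
  have syms : forall a b, ipG G a b = ipG G b a by move=> a b; exact: ipG_sym.
  have ys : ipG G y s = 0 by rewrite syms.
  rewrite {1}/x ipG_linl (syms s x) (syms y x) /x !ipG_linl.
  rewrite us sy ys -/q; ring.
rewrite fxe => h.
have Dp : 0 < lam ^+ 2 * q + 1 by rewrite ltr_wpDl // mulr_ge0 // sqr_ge0.
move: ee1; rewrite ler_pdivlMr // => h3.
have h4 : 0 < lam * e * l by rewrite -mulrA nmulr_rgt0.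
have h5 := ler_wpM2l (ltW ep) h3.
have h6 : 0 <= (e * l) ^+ 2 by rewrite sqr_ge0.
have h7 : 0 < e ^+ 2 by rewrite exprn_gt0.
have key : ((lam + e * l) ^+ 2 - lam ^+ 2 * (1 + e ^+ 2 * q)) +
   (e * (e * (lam ^+ 2 * q + 1)) - e * (lam * l)) = lam * e * l + (e * l) ^+ 2 + e ^+ 2.
  by ring.
have k1 : (lam + e * l) ^+ 2 - lam ^+ 2 * (1 + e ^+ 2 * q) <= 0 by rewrite subr_le0.
have k2 : e * (e * (lam ^+ 2 * q + 1)) - e * (lam * l) <= 0 by rewrite subr_le0.
have : lam * e * l + (e * l) ^+ 2 + e ^+ 2 <= 0 by rewrite -key; lra.
lra.
Qed.

Lemma kkt n k (G : 'M[R]_n) (C : 'M[R]_(n,k)) (c : 'cV[R]_n) (s : 'rV[R]_n) :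
  is_inner_product G -> in_unit_sphere G s -> in_cone C s ->
  (forall y, in_unit_sphere G y -> in_cone C y -> lfun c s <= lfun c y) ->
  lfun c s < 0 ->
  forall y, (forall j, lfun (col j C) s = 0 -> lfun (col j C) y = 0) ->
    lfun c y = lfun c s * ipG G s y.
Proof.
move=> Gip us cs hmin lamn y hy.
have [GT Gpos] := Gip.
set y' := 1 *: y + (- ipG G s y) *: s.
have hy' : forall j, lfun (col j C) s = 0 -> lfun (col j C) y' = 0.
  by move=> j hj; rewrite /y' lfun_lin hj (hy _ hj) !mulr0 addr0.
have sy' : ipG G s y' = 0.
  have syms : forall a b, ipG G a b = ipG G b a by move=> a b; exact: ipG_sym.
  by rewrite syms /y' ipG_linl (syms y s) us; ring.
have ly' : lfun c y' = lfun c y - ipG G s y * lfun c s by rewrite /y' lfun_lin; ring.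
have [lt|gt|eq] := ltgtP (lfun c y') 0.
- by case: (@kkt0 _ _ G C c s Gip us cs hmin lamn _ hy' sy' lt).
- have hy'' : forall j, lfun (col j C) s = 0 -> lfun (col j C) ((-1) *: y') = 0.
    by move=> j hj; rewrite lfunZ (hy' _ hj) mulr0.
  have sy'' : ipG G s ((-1) *: y') = 0 by rewrite ipGZr sy' mulr0.
  have lt : lfun c ((-1) *: y') < 0 by rewrite lfunZ mulN1r oppr_lt0.
  by case: (@kkt0 _ _ G C c s Gip us cs hmin lamn _ hy'' sy'' lt).
- move: eq; rewrite ly' => /eqP; rewrite subr_eq0 => /eqP ->; ring.
Qed.


Lemma int_mx m p (A : 'M[R]_(m,p)) : (forall i j, A i j \is a Num.int) ->
  exists A0 : 'M[rat]_(m,p), A = map_mx ratr A0.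
Proof.
move=> hA; exists (\matrix_(i,j) ((Num.floor (A i j))%:~R)).
by apply/matrixP => i j; rewrite !mxE ratr_int floorK.
Qed.

Lemma rational_sol n k (Q0 : 'M[rat]_n) (DF0 : 'M[rat]_(n,k)) (d0 : 'cV[rat]_n) :
 let Q := map_mx (ratr : rat -> R) Q0 in
 let DF := map_mx (ratr : rat -> R) DF0 in
 let d := map_mx (ratr : rat -> R) d0 in
 (forall u : 'rV[R]_n, u != 0 -> 0 < (u *m Q *m u^T) 0 0) ->
 forall w, w *m DF = 0 -> (forall y : 'rV[R]_n, y *m DF = 0 -> y *m d = y *m Q *m w^T) ->
 exists w0 : 'rV[rat]_n, w = map_mx ratr w0.
Proof.
move=> Q DF d pos w wD wc.
have uniq : forall w1 w2 : 'rV[R]_n, w1 *m DF = 0 ->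
    (forall y : 'rV[R]_n, y *m DF = 0 -> y *m d = y *m Q *m w1^T) ->
    w2 *m DF = 0 ->
    (forall y : 'rV[R]_n, y *m DF = 0 -> y *m d = y *m Q *m w2^T) -> w1 = w2.
  move=> w1 w2 h1 c1 h2 c2.
  have hD : (w1 - w2) *m DF = 0 by rewrite mulmxBl h1 h2 subrr.
  have e0 : (w1 - w2) *m Q *m (w1 - w2)^T = 0.
    by rewrite linearB /= mulmxBr -(c1 _ hD) -(c2 _ hD) subrr.
  apply/eqP; rewrite -subr_eq0; apply/negPn/negP => hn.
  by have := pos _ hn; rewrite e0 mxE ltxx.
set KR := kermx DF.
have KD : KR *m DF = 0 := mulmx_ker DF.
have KRE : KR = map_mx ratr (kermx DF0) by rewrite /KR map_kermx.
have wK : (w <= KR)%MS by rewrite sub_kermx wD.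
set u1 := w *m pinvmx KR.
have u1K : u1 *m KR = w by rewrite mulmxKpV.
have rowc : KR *m d = KR *m Q *m w^T.
  apply/row_matrixP => i; rewrite (row_mul i KR d) (row_mul i (KR *m Q)) (row_mul i KR Q); apply: wc.
  move: (congr1 (row i) KD); rewrite row_mul row0 => h; exact: h.
set P0 : 'M[rat]_n := (kermx DF0 *m Q0 *m (kermx DF0)^T)^T.
set b0 : 'rV[rat]_n := (kermx DF0 *m d0)^T.
have hP : map_mx ratr P0 = (KR *m Q *m KR^T)^T.
  by rewrite KRE /Q !map_trmx -!map_mxM !map_trmx.
have hb : map_mx ratr b0 = (KR *m d)^T.
  by rewrite KRE /d -!map_mxM !map_trmx.
have sub1 : (map_mx (ratr : rat -> R) b0 <= map_mx ratr P0)%MS.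
  apply/submxP; exists u1; rewrite hP hb.
  rewrite rowc -u1K.
  have -> : KR *m Q *m (u1 *m KR)^T = (KR *m Q *m KR^T) *m u1^T.
    by rewrite trmx_mul !mulmxA.
  by rewrite trmx_mul trmxK.
rewrite map_submx in sub1.
set u0 := b0 *m pinvmx P0.
have u0P : u0 *m P0 = b0 by rewrite mulmxKpV.
exists (u0 *m kermx DF0).
apply: uniq => //.
- by rewrite map_mxM -KRE -mulmxA mulmx_ker mulmx0.
- move=> y yD.
  have yK : (y <= KR)%MS by rewrite sub_kermx yD.
  have := mulmxKpV yK; set yy := y *m pinvmx KR => yE.
  have hu : (KR *m Q *m KR^T) *m (map_mx ratr u0)^T = KR *m d.
    apply: trmx_inj; rewrite trmx_mul trmxK -hP -hb -map_mxM u0P //.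
  rewrite -yE -(mulmxA yy KR d) -hu [map_mx _ (u0 *m _)]map_mxM -KRE.
  by rewrite (trmx_mul (map_mx ratr u0) KR) !mulmxA.
Qed.


Lemma vec_bezout n (v : 'I_n -> int) : exists g : int, exists a : 'I_n -> int,
  g = \sum_i a i * v i /\ forall i, (g %| v i)%Z.
Proof.
elim: n v => [|n IH] v.
  by exists 0, (fun _ => 0); split; [rewrite big_ord0 | case].
have [g' [a' [ge gd]]] := IH (fun i => v (lift ord0 i)).
have [u [w uw]] := Bezoutz g' (v ord0).
exists (gcdz g' (v ord0)).
exists (fun i => match unlift ord0 i with Some j => u * a' j | None => w end).
split.
  rewrite big_ord_recl unlift_none -uw ge mulr_sumr addrC; congr (_ + _).
  by apply: eq_bigr => j _; rewrite liftK mulrA.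
move=> i; case: (unliftP ord0 i) => [j ->|->]; last exact: dvdz_gcdr.
apply: dvdz_trans (dvdz_gcdl _ _) (gd j).
Qed.

Lemma clear_den n (v0 : 'rV[rat]_n) : exists N : int, 0 < N /\
  exists v1 : 'rV[int]_n, forall i, ((v1 0 i)%:~R : rat) = N%:~R * v0 0 i.
Proof.
exists (\prod_i denq (v0 0 i)); split.
  by apply: prodr_gt0 => i _; exact: denq_gt0.
exists (\row_i (numq (v0 0 i) * \prod_(j | j != i) denq (v0 0 j))).
move=> i; rewrite mxE [in RHS](bigD1 i) //= !intrM numqE.
ring.
Qed.


Lemma ray_lattice n (v0 : 'rV[rat]_n) (t : R) : v0 != 0 -> t != 0 ->
  exists (p : 'rV[int]_n) (a : 'I_n -> int) (t' : R), 0 < t' /\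
    \sum_i a i * p 0 i = 1 /\ t *: map_mx ratr v0 = t' *: map_mx intr p.
Proof.
move=> v0n tn.
have [N [Np [v1 hv1]]] := clear_den _ v0.
have [g [a [ge gd]]] := vec_bezout _ (fun i => v1 0 i).
have gn : g != 0.
  apply/eqP => g0; move/eqP: v0n; apply; apply/rowP => i.
  have := gd i; rewrite g0 dvd0z => /eqP v1i.
  have := hv1 i; rewrite v1i mxE => /esym /eqP; rewrite mulf_eq0 => /orP [|/eqP //].
  by rewrite intr_eq0 gt_eqF.
set p := \row_i (divz (v1 0 i) g).
have hp : forall i, v1 0 i = p 0 i * g by move=> i; rewrite mxE divzK.
have sap : \sum_i a i * p 0 i = 1.
  apply: (mulIf gn); rewrite mul1r {2}ge mulr_suml.
  by apply: eq_bigr => i _; rewrite hp mulrA.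
have hmap : t *: map_mx ratr v0 = (t * g%:~R / N%:~R) *: map_mx intr p.
  apply/rowP => i; rewrite !mxE.
  have : v0 0 i = (v1 0 i)%:~R / N%:~R.
    by rewrite hv1 [_ * v0 0 i]mulrC mulfK // intr_eq0 gt_eqF.
  move=> ->; rewrite hp fmorph_div /= !ratr_int intrM.
  rewrite mulzK //; field; by rewrite intr_eq0 gt_eqF.
have tau : t * g%:~R / N%:~R != 0.
  by rewrite !mulf_neq0 // ?invr_eq0 intr_eq0 // gt_eqF.
have [tp|tn'] := ltrP 0 (t * g%:~R / N%:~R).
  by exists p, a, (t * g%:~R / N%:~R).
exists (- p), (fun i => - a i), (- (t * g%:~R / N%:~R)); split.
  by rewrite oppr_gt0 lt_neqAle tau tn'.
split.
  by rewrite -sap; apply: eq_bigr => i _; rewrite mxE mulrNN.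
by rewrite hmap raddfN /= scaleNr scalerN opprK.
Qed.

End Helpers.

Lemma delta_entry (R : realType) n (A : 'M[R]_n) i j :
  ((delta_mx 0 i : 'rV[R]_n) *m A *m (delta_mx 0 j : 'rV[R]_n)^T) 0 0 = A i j.
Proof. by rewrite -rowE trmx_delta -colE !mxE. Qed.

Lemma delta_entry_c (R : realType) n (X : 'cV[R]_n) i :
  ((delta_mx 0 i : 'rV[R]_n) *m X) 0 0 = X i 0.
Proof. by rewrite -rowE !mxE. Qed.

Lemma lattice_delta (R : realType) n (B : 'M[R]_n) i :
  in_lattice B ((delta_mx 0 i : 'rV[R]_n) *m B).
Proof.
exists (delta_mx 0 i); congr (_ *m B); apply/matrixP => a b; rewrite !mxE.
by case: (_ == _); case: (_ == _).
Qed.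

Theorem corollary2p3 (R : realType) (n k : nat)
  (G : 'M[R]_n) (B : 'M[R]_n) (C : 'M[R]_(n, k)) (c : 'cV[R]_n) (s : 'rV[R]_n) :
  is_inner_product G ->
  B \in unitmx ->
  (forall m1 m2, in_lattice B m1 -> in_lattice B m2 -> ipG G m1 m2 \is a Num.int) ->
  rational_cone_data B C ->
  integral_on_lattice B c ->
  (exists x, in_cone C x /\ lfun c x < 0) ->
  in_unit_sphere G s -> in_cone C s ->
  (forall y, in_unit_sphere G y -> in_cone C y -> lfun c s <= lfun c y) ->
  exists! m : 'rV[R]_n,
    [/\ in_lattice B m, m != 0, indivisible B m &
        exists2 t : R, 0 < t & m = t *: s].
Proof.
move=> Gip Bu Gint Cint cint [x0 [x0c fx0]] us cs hmin.
have [GT Gpos] := Gip.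
have syms : forall a b, ipG G a b = ipG G b a by move=> a b; exact: ipG_sym.
set lam := lfun c s.
have lamn : lam < 0.
  have xn0 : x0 != 0 by apply: contraTneq fx0 => ->; rewrite lfun0 ltxx.
  have qp := Gpos x0 xn0.
  set q := ipG G x0 x0 in qp.
  set r := Num.sqrt q.
  have rp : 0 < r by rewrite sqrtr_gt0.
  have r2 : r ^+ 2 = q by rewrite sqr_sqrtr // ltW.
  have rip : 0 < r^-1 by rewrite invr_gt0.
  have := hmin (r^-1 *: x0).
  rewrite /in_unit_sphere ipGZ ipGZr lfunZ -/q.
  have -> : r^-1 * (r^-1 * q) = 1.
    by rewrite -r2 expr2 mulrA -invfM mulVf // mulf_neq0 // gt_eqF.
  move=> /(_ erefl (@cone_scale _ _ _ C _ x0 (ltW rip) x0c)) h.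
  apply: (le_lt_trans h); rewrite pmulr_rlt0 //.
have kk := @kkt _ _ _ G C c s Gip us cs hmin lamn.
set Q := B *m G *m B^T.
set d := B *m c.
set DF := \matrix_(i, j) (if lfun (col j C) s == 0 then (B *m C) i j else 0).
have ipB : forall u v, ipG G (u *m B) (v *m B) = (u *m Q *m v^T) 0 0.
  by move=> u v; rewrite /ipG /Q trmx_mul !mulmxA.
have lfB : forall u (c' : 'cV[R]_n), lfun c' (u *m B) = (u *m (B *m c')) 0 0.
  by move=> u c'; rewrite /lfun mulmxA.
have Qint : forall i j, Q i j \is a Num.int.
  move=> i j; rewrite -delta_entry -ipB; apply: Gint; exact: lattice_delta.
have dint : forall i j, d i j \is a Num.int.
  move=> i j; rewrite (ord1 j) -delta_entry_c /d -lfB; apply: cint; exact: lattice_delta.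
have BCE : forall u j, lfun (col j C) (u *m B) = (u *m (B *m C)) 0 j.
  by move=> u j; rewrite lfB colE !mulmxA -colE mxE.
have DFint : forall i j, DF i j \is a Num.int.
  move=> i j; rewrite mxE; case: ifP => _ //.
  have := Cint j _ (@lattice_delta _ _ B i); rewrite BCE -rowE mxE //.
have DFE : forall (u : 'rV[R]_n) j, (u *m DF) 0 j =
    if lfun (col j C) s == 0 then (u *m (B *m C)) 0 j else 0.
  move=> u j; rewrite mxE; case: ifP => h.
    by rewrite mxE; apply: eq_bigr => i _; rewrite /DF mxE h.
  by rewrite big1 // => i _; rewrite /DF mxE h mulr0.
have DFchar : forall u, u *m DF = 0 <->
    (forall j, lfun (col j C) s = 0 -> lfun (col j C) (u *m B) = 0).
  move=> u; split.
    move=> h j hj; rewrite BCE; have := DFE u j.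
    by rewrite hj eqxx h mxE => <-.
  move=> h; apply/rowP => j; rewrite DFE [RHS]mxE; case: eqP => hj //.
  by rewrite -BCE; exact: h.
set sg := s *m invmx B.
have sgB : sg *m B = s by rewrite /sg mulmxKV.
set w := lam *: sg.
have wB : w *m B = lam *: s by rewrite /w -scalemxAl sgB.
have wDF : w *m DF = 0.
  by apply/DFchar => j hj; rewrite wB lfunZ hj mulr0.
have wc : forall y : 'rV[R]_n, y *m DF = 0 -> y *m d = y *m Q *m w^T.
  move=> y /DFchar hy; apply/rowP => j; rewrite (ord1 j).
  rewrite -/(lfun c (y *m B)) -lfB (kk _ hy) syms -sgB ipB.
  by rewrite /w linearZ /= -scalemxAr [RHS]mxE sgB.
have pos : forall u : 'rV[R]_n, u != 0 -> 0 < (u *m Q *m u^T) 0 0.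
  move=> u un; rewrite -ipB; apply: Gpos; apply: contraNneq un => h.
  by rewrite -(mulmxK Bu u) h mul0mx.
have [Q0 eQ] := int_mx _ _ _ Q Qint.
have [DF0 eDF] := int_mx _ _ _ DF DFint.
have [d0 ed] := int_mx _ _ _ d dint.
rewrite eQ in pos wc; rewrite eDF in wDF wc; rewrite ed in wc.
have [w0 ew0] := rational_sol _ _ _ Q0 DF0 d0 pos _ wDF wc.
have sn0 : s != 0.
  by apply/eqP => s0; move: us; rewrite /in_unit_sphere s0 ipG0 => /eqP; rewrite eq_sym oner_eq0.
have sgn0 : sg != 0 by apply: contraNneq sn0 => h; rewrite -sgB h mul0mx.
have lamn0 : lam != 0 by rewrite lt_eqF.
have w0n : w0 != 0.
  apply: contraNneq sgn0 => h; move: ew0; rewrite h map_mx0 /w => /eqP.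
  by rewrite scaler_eq0 (negbTE lamn0).
have [p [a [t' [t'p [sap hpt]]]]] := ray_lattice _ _ w0 lam^-1 w0n (invr_neq0 lamn0).
have sgE : sg = t' *: map_mx intr p by rewrite -hpt -ew0 /w scalerA mulVf // scale1r.
have sE : s = t' *: (map_mx intr p *m B) by rewrite -sgB sgE -scalemxAl.
set m := map_mx intr p *m B in sE *.
have mlat : in_lattice B m by exists p.
have Binj : forall u v : 'rV[R]_n, u *m B = v *m B -> u = v.
  by move=> u v h; rewrite -(mulmxK Bu u) h mulmxK.
exists m; split.
  split => //.
  - by apply: contraNneq sn0 => m0; rewrite sE m0 scaler0.
  - move=> N m' [z' ->] hm.
    have hpz : map_mx (intr : int -> R) p = N%:R *: map_mx intr z'.
      by apply: Binj; rewrite -scalemxAl; exact: hm.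
    have hpz' : forall i, p 0 i = N%:Z * z' 0 i.
      move=> i; apply: (@intr_inj R).
      rewrite (rmorphM (intr : int -> R)) /=.
      by have := congr1 (fun M : 'rV[R]_n => M 0 i) hpz; rewrite /= !mxE.
    have : (N%:Z %| \sum_i a i * p 0 i)%Z.
      apply/dvdzP; exists (\sum_i a i * z' 0 i); rewrite mulr_suml.
      by apply: eq_bigr => i _; rewrite hpz'; ring.
    by rewrite sap dvdz1 => /eqP.
  - exists t'^-1; first by rewrite invr_gt0.
    by rewrite sE scalerA mulVf ?scale1r // gt_eqF.
move=> m2 [[z2 ->] m2n ind2 [t2 t2p e2]].
have e2' : map_mx intr z2 *m B = t2 *: s := e2.
set r := t2 * t'.
have rp : 0 < r by rewrite mulr_gt0.
have hz : map_mx intr z2 = r *: map_mx intr p.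
  by apply: Binj; rewrite -scalemxAl e2' sE scalerA.
have hz' : forall i, ((z2 0 i)%:~R : R) = r * (p 0 i)%:~R.
  by move=> i; have := congr1 (fun M : 'rV[R]_n => M 0 i) hz; rewrite /= !mxE.
set K := \sum_i a i * z2 0 i.
have hK : (K%:~R : R) = r.
  transitivity (r * ((\sum_i a i * p 0 i)%:~R : R)); last by rewrite sap mulr1.
  rewrite /K !rmorph_sum mulr_sumr; apply: eq_bigr => i _; rewrite !(rmorphM (intr : int -> R)) /= hz'; ring.
have Kp : 0 < K by rewrite -(ltr0z R) hK.
have hN : ((`|K|%N)%:R : R) = r by rewrite -hK -{2}(gtz0_abs Kp).
have m2E : map_mx (fun k : int => k%:~R) z2 *m B = (`|K|%N)%:R *: m.
  by rewrite hN /m scalemxAl -hz.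
have := ind2 _ m mlat m2E => N1.
by rewrite m2E N1 scale1r.
Qed.
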